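(* Let $P$ be a trivial poset. If $w(P)=1$, then $R(P,Q_n)=n+h(P)-1$ for every positive integer $n$. If $w(P)\ge2$, then for every positive integer $n$, $$n+h(P)+1\le R(P,Q_n)<n+h(P)+\log(w(P))+\tfrac12\log\log(w(P))+1.$$
   Context: The poset $\mathcal{V}$ has three elements $A,B,C$ with $C\le A$, $C\le B$, $A$ and $B$ incomparable; the poset $\Lambda$ (upside-down $\mathcal{V}$) has three elements $A,B,C$ with $A\le C$, $B\le C$, $A$ and $B$ incomparable. A poset is trivial if it contains no induced subposet isomorphic to $\mathcal{V}$ or to $\Lambda$ (equivalently, it is a disjoint union of chains that are pairwise element-wise incomparable). The height $h(P)$ is the size of a largest chain in $P$; the width $w(P)$ is the size of a largest antichain in $P$. $Q_n$ is the Boolean lattice of subsets of an $n$-element set ordered by inclusion. $R(P_1,P_2)$ is the smallest integer $N$ such that every blue/red coloring of the elements of $Q_N$ contains an all-blue induced copy of $P_1$ or an all-red induced copy of $P_2$. $\log$ is base $2$. *)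

(* Defs.v *)
From mathcomp Require Import all_boot.
From Stdlib Require Import Reals.
Set Implicit Arguments. Unset Strict Implicit. Unset Printing Implicit Defensive.

Definition is_poset (T : finType) (le : rel T) : Prop :=
  reflexive le /\ antisymmetric le /\ transitive le.

Definition Qle (n : nat) : rel {set 'I_n} := fun A B => A \subset B.

Definition is_chain (T : finType) (le : rel T) (S : {set T}) : bool :=
  [forall x in S, forall y in S, le x y || le y x].
Definition is_antichain (T : finType) (le : rel T) (S : {set T}) : bool :=
  [forall x in S, forall y in S, (x != y) ==> (~~ le x y && ~~ le y x)].

Definition height (T : finType) (le : rel T) : nat :=
  \max_(S : {set T} | is_chain le S) #|S|.
Definition width (T : finType) (le : rel T) : nat :=
  \max_(S : {set T} | is_antichain le S) #|S|.

Definition has_V (T : finType) (le : rel T) : Prop :=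
  exists a b c : T, [/\ c != a, c != b, le c a, le c b & ~~ le a b && ~~ le b a].
Definition has_Lambda (T : finType) (le : rel T) : Prop :=
  exists a b c : T, [/\ a != c, b != c, le a c, le b c & ~~ le a b && ~~ le b a].
Definition trivial_poset (T : finType) (le : rel T) : Prop :=
  ~ has_V le /\ ~ has_Lambda le.

Definition induced_copy (T : finType) (le : rel T) (N : nat)
  (f : T -> {set 'I_N}) : Prop :=
  injective f /\ forall x y, le x y <-> f x \subset f y.

(* A monochromatic induced copy of color b (true = blue, false = red). *)
Definition mono_copy (T : finType) (le : rel T) (N : nat)
  (col : {set 'I_N} -> bool) (b : bool) : Prop :=
  exists f : T -> {set 'I_N}, induced_copy le f /\ forall x, col (f x) = b.

Definition ramsey_prop (T1 : finType) (le1 : rel T1) (T2 : finType) (le2 : rel T2)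
  (N : nat) : Prop :=
  forall col : {set 'I_N} -> bool, mono_copy le1 col true \/ mono_copy le2 col false.

Definition is_ramsey_number (T1 : finType) (le1 : rel T1) (T2 : finType) (le2 : rel T2)
  (N : nat) : Prop :=
  ramsey_prop le1 le2 N /\ forall M, M < N -> ~ ramsey_prop le1 le2 M.

Definition log2 (x : R) : R := (ln x / ln 2)%R.

(* Main.v *)
Require Import Defs.
From mathcomp Require Import all_boot.
From Stdlib Require Import Reals.
From Stdlib Require Import Classical Lra.
From mathcomp Require Import all_boot zify.
Set Implicit Arguments. Unset Strict Implicit. Unset Printing Implicit Defensive.

Definition cmpb (T : finType) (le : rel T) x y := le x y || le y x.

Lemma cmpb_trans (T : finType) (le : rel T) : is_poset le -> trivial_poset le ->
  forall x y z, cmpb le x y -> cmpb le y z -> cmpb le x z.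
Proof.
move=> [Hr [Ha Ht]] [HV HL] x y z; rewrite /cmpb.
case/orP=> Hxy; case/orP=> Hyz.
- by rewrite (Ht _ _ _ Hxy Hyz).
- case Exz: (le x z); first by [].
  case Ezx: (le z x) => //.
  have [Exy|Nxy] := eqVneq x y; first by subst y; rewrite Hyz in Ezx.
  have [Ezy|Nzy] := eqVneq z y; first by subst y; rewrite Hxy in Exz.
  exfalso; apply: HL; exists x, z, y; split => //; by rewrite Exz Ezx.
- case Exz: (le x z); first by [].
  case Ezx: (le z x) => //.
  have [Exy|Nxy] := eqVneq y x; first by subst y; rewrite Hyz in Exz.
  have [Ezy|Nzy] := eqVneq y z; first by subst y; rewrite Hxy in Ezx.
  exfalso; apply: HV; exists x, z, y; split => //; by rewrite Exz Ezx.
- by rewrite (Ht _ _ _ Hyz Hxy) orbT.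
Qed.

Lemma cmpb_sym (T : finType) (le : rel T) x y : cmpb le x y = cmpb le y x.
Proof. by rewrite /cmpb orbC. Qed.

Lemma height_ub (T : finType) (le : rel T) S : is_chain le S -> #|S| <= height le.
Proof. move=> H; rewrite /height /width; exact: (@leq_bigmax_cond _ _ (fun S : {set T} => #|S|) S H). Qed.

Lemma width_ub (T : finType) (le : rel T) S : is_antichain le S -> #|S| <= width le.
Proof. move=> H; rewrite /height /width; exact: (@leq_bigmax_cond _ _ (fun S : {set T} => #|S|) S H). Qed.

Lemma height_wit (T : finType) (le : rel T) : exists2 S, is_chain le S & #|S| = height le.
Proof.
have : 0 < #|[pred S : {set T} | is_chain le S]|.
  apply/card_gt0P; exists set0; rewrite inE; apply/forall_inP => x; by rewrite inE.
move/(eq_bigmax_cond (fun S : {set T} => #|S|)) => [S HS E]; by exists S; rewrite // /height E.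
Qed.

Lemma width_wit (T : finType) (le : rel T) : exists2 S, is_antichain le S & #|S| = width le.
Proof.
have : 0 < #|[pred S : {set T} | is_antichain le S]|.
  apply/card_gt0P; exists set0; rewrite inE; apply/forall_inP => x; by rewrite inE.
move/(eq_bigmax_cond (fun S : {set T} => #|S|)) => [S HS E]; by exists S; rewrite // /width E.
Qed.

Lemma copy_chain_uniq (T : finType) (le : rel T) M (f : T -> {set 'I_M}) S :
  induced_copy le f -> is_chain le S -> uniq [seq #|f s| | s <- enum S].
Proof.
move=> [Hinj Hord] /forall_inP HS.
rewrite map_inj_in_uniq ?enum_uniq // => s t; rewrite !mem_enum => Hs Ht Heq.
apply: Hinj; have /forall_inP/(_ t Ht) := HS s Hs.
case/orP => [/Hord Hst | /Hord Hts].
  by apply/eqP; rewrite eqEcard Hst Heq leqnn.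
by apply/eqP; rewrite eq_sym eqEcard Hts Heq leqnn.
Qed.

Definition pre n (i : nat) : {set 'I_n} := [set u : 'I_n | u < i].

Lemma red_uniq n M (g : {set 'I_n} -> {set 'I_M}) :
  induced_copy (@Qle n) g -> uniq [seq #|g (pre n i)| | i <- iota 0 n.+1].
Proof.
move=> [Hinj Hord].
have key : forall i j, i < j <= n -> #|g (pre n i)| < #|g (pre n j)|.
  move=> i j /andP [Hij Hjn].
  have Hsub : pre n i \subset pre n j.
    apply/subsetP => u; rewrite !inE => Hu; lia.
  have Hne : pre n i != pre n j.
    have Hin : i < n by lia.
    apply/negP => /eqP E.
    have : Ordinal Hin \in pre n j by rewrite inE.
    by rewrite -E inE /= ltnn.
  apply: proper_card; rewrite properEneq; apply/andP; split.
    apply/negP => /eqP /Hinj E; by rewrite E eqxx in Hne.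
  by apply/Hord.
rewrite map_inj_in_uniq ?iota_uniq // => i j; rewrite !mem_iota /= !add0n => Hi Hj Heq.
have [Hlt|Hgt|//] := ltngtP i j.
  by have := key i j; rewrite Heq ltnn; lia.
by have := key j i; rewrite Heq ltnn; lia.
Qed.

Lemma no_red_copy n M (col : {set 'I_M} -> bool) (s : seq nat) :
  size s <= n -> (forall X, col X = false -> #|X| \in s) -> ~ mono_copy (@Qle n) col false.
Proof.
move=> Hs Hc [g [Hg Hcol]].
have U := red_uniq Hg.
have := uniq_leq_size U (s2 := s).
rewrite size_map size_iota => H.
have : n < n; last by rewrite ltnn.
apply: leq_trans Hs; apply: H => z /mapP [i _ ->]; exact: Hc.
Qed.

Lemma no_blue_chain (T : finType) (le : rel T) M (col : {set 'I_M} -> bool) (s : seq nat) :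
  size s < height le -> (forall X, col X = true -> #|X| \in s) -> ~ mono_copy le col true.
Proof.
move=> Hs Hc [f [Hf Hcol]].
have [S HS HSh] := height_wit le.
have U := copy_chain_uniq Hf HS.
have := uniq_leq_size U (s2 := s).
rewrite size_map -cardE HSh => H.
have : height le < height le; last by rewrite ltnn.
apply: leq_ltn_trans Hs; apply: H => z /mapP [i _ ->]; exact: Hc.
Qed.

Lemma chain_and_out (T : finType) (le : rel T) : is_poset le -> trivial_poset le ->
  2 <= width le -> exists S y, [/\ is_chain le S, #|S| = height le &
     forall s, s \in S -> ~~ cmpb le y s].
Proof.
move=> Hp Ht Hw.
have [A HA HAw] := width_wit le.
have : 1 < #|A| by rewrite HAw.
case/card_gt1P => a [b [Ha Hb Hab]].
have /forall_inP/(_ a Ha)/forall_inP/(_ b Hb) := HA.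
rewrite Hab /= => /andP [Nab Nba].
have [S HS HSh] := height_wit le.
have Hh : 0 < height le.
  apply: leq_trans (height_ub (S := [set a]) _); first by rewrite cards1.
  have [Hr _] := Hp.
  apply/forall_inP => x /set1P ->; apply/forall_inP => y /set1P ->; by rewrite Hr.
have : 0 < #|S| by rewrite HSh.
case/card_gt0P => s0 Hs0.
have Hcomp : forall y, ~~ cmpb le y s0 -> forall s, s \in S -> ~~ cmpb le y s.
  move=> y Hy s Hs; apply/negP => Hys; move/negP: Hy; apply.
  apply: cmpb_trans Hys _ => //.
  by have /forall_inP/(_ s Hs)/forall_inP/(_ s0 Hs0) := HS.
case Ea: (cmpb le a s0).
  case Eb: (cmpb le b s0).
    exfalso; have := cmpb_trans Hp Ht Ea (y := s0) (z := b).
    rewrite cmpb_sym Eb => /(_ isT); by rewrite /cmpb (negPf Nab) (negPf Nba).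
  exists S, b; split => //; apply: Hcomp; by rewrite Eb.
exists S, a; split => //; apply: Hcomp; by rewrite Ea.
Qed.

Lemma no_blue_w2 (T : finType) (le : rel T) M (col : {set 'I_M} -> bool) (s : seq nat) :
  is_poset le -> trivial_poset le -> 2 <= width le ->
  size s < height le -> (forall X, col X = true -> 0 < #|X| < M -> #|X| \in s) ->
  ~ mono_copy le col true.
Proof.
move=> Hp Ht Hw Hs Hc [f [Hf Hcol]].
have [S [y [HS HSh Hy]]] := chain_and_out Hp Ht Hw.
have U := copy_chain_uniq Hf HS.
have := uniq_leq_size U (s2 := s).
rewrite size_map -cardE HSh => H.
have : height le < height le; last by rewrite ltnn.
apply: leq_ltn_trans Hs; apply: H => z /mapP [i Hi ->]; apply: Hc => //.
rewrite mem_enum in Hi; have Hyi := Hy i Hi.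
have [Hinj Hord] := Hf.
apply/andP; split.
  rewrite lt0n cards_eq0; apply/negP => /eqP E.
  move/negP: Hyi; apply; rewrite /cmpb; apply/orP; right; apply/Hord; by rewrite E sub0set.
have := max_card (f i); rewrite card_ord leq_eqVlt => /orP [/eqP E|//].
exfalso; move/negP: Hyi; apply; rewrite /cmpb; apply/orP; left; apply/Hord.
have -> : f i = setT by apply/eqP; rewrite eqEcard subsetT cardsT card_ord E leqnn.
exact: subsetT.
Qed.

Lemma lower_w1 (T : finType) (le : rel T) n M : 0 < height le ->
  M < n + height le - 1 -> ~ ramsey_prop le (@Qle n) M.
Proof.
move=> Hh HM Hr.
have := Hr (fun X => #|X| + 2 <= height le); case.
- apply: (no_blue_chain (s := iota 0 (height le).-1)); first by rewrite size_iota; lia.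
  move=> X HX; rewrite mem_iota; lia.
- apply: (no_red_copy (s := iota (height le).-1 (M.+1 - (height le).-1))).
    rewrite size_iota; lia.
  move=> X HX; rewrite mem_iota; have := max_card X; rewrite card_ord.
  move/negbT: HX; lia.
Qed.

Lemma lower_w2 (T : finType) (le : rel T) n M : is_poset le -> trivial_poset le ->
  2 <= width le -> 0 < height le ->
  M <= n + height le -> ~ ramsey_prop le (@Qle n) M.
Proof.
move=> Hp Ht Hw Hh HM Hr.
set h := height le in Hh HM.
have := Hr (fun X => [|| #|X| + 2 <= h, #|X| == 0, #|X| == M | (2 <= h) && (#|X|.+1 == M)]).
case.
- apply: (no_blue_w2 (s := if h == 1 then [::] else iota 1 (h - 2) ++ [:: M.-1])) => //.
    case: eqP => Eh /=; first by rewrite -/h; lia.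
    rewrite size_cat size_iota /= -/h; lia.
  move=> X HX HXM; case: eqP => Eh.
    exfalso; move: HX HXM; rewrite Eh; lia.
  rewrite mem_cat mem_iota inE; move: HX HXM; lia.
- apply: (no_red_copy (s := if h == 1 then iota 1 M.-1 else iota h.-1 (M.-1 - h.-1))).
    case: eqP => Eh; rewrite size_iota; lia.
  move=> X HX; have := max_card X; rewrite card_ord => HXM.
  case: (h =P 1) => Eh; move/negbT: HX; rewrite mem_iota; lia.
Qed.

Definition lez n h (p q : {set 'I_n} * 'I_h) := (p.1 \subset q.1) && (p.2 <= q.2).

Lemma lez_refl n h : reflexive (@lez n h).
Proof. by move=> p; rewrite /lez subxx leqnn. Qed.
Lemma lez_trans n h : transitive (@lez n h).
Proof.
move=> q p r /andP [H1 H2] /andP [H3 H4]; rewrite /lez (subset_trans H1 H3) /=; lia.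
Qed.
Lemma lez_anti n h : antisymmetric (@lez n h).
Proof.
move=> [X i] [Y j] /andP [/andP [H1 H2] /andP [H3 H4]] /=.
have -> : X = Y by apply/eqP; rewrite eqEsubset H1 H3.
have -> : i = j by apply/eqP; rewrite -val_eqE /= eqn_leq H2 H4.
done.
Qed.

Definition rho n h (c : {set 'I_n} * 'I_h -> bool) (p : {set 'I_n} * 'I_h) :=
  \max_(S : {set {set 'I_n} * 'I_h} | [&& is_chain (@lez n h) S, [forall z in S, c z] &
       [forall z in S, lez z p]]) #|S|.

Lemma rho_mono n h (c : {set 'I_n} * 'I_h -> bool) p q : lez q p -> @rho n h c q <= rho c p.
Proof.
move=> Hqp; apply/bigmax_leqP => S /and3P [H1 H2 H3].
apply: (@leq_bigmax_cond _ _ (fun S : {set _} => #|S|)).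
rewrite H1 H2 /=; apply/forall_inP => z Hz.
by apply: lez_trans Hqp; move/forall_inP: H3; apply.
Qed.

Lemma rho_bound n h (c : {set 'I_n} * 'I_h -> bool) p b :
  (forall S, is_chain (@lez n h) S -> (forall z, z \in S -> c z) -> #|S| <= b) ->
  @rho n h c p <= b.
Proof.
move=> HB; apply/bigmax_leqP => S /and3P [H1 /forall_inP H2 H3]; exact: HB.
Qed.

Lemma rho_blue0 n h (c : {set 'I_n} * 'I_h -> bool) p : c p -> 0 < @rho n h c p.
Proof.
move=> Hc; apply: leq_trans (@leq_bigmax_cond _ _ (fun S : {set _} => #|S|) [set p] _).
  by rewrite cards1.
apply/and3P; split.
- apply/forall_inP => x /set1P ->; apply/forall_inP => y /set1P ->; by rewrite lez_refl.
- by apply/forall_inP => x /set1P ->.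
- by apply/forall_inP => x /set1P ->; rewrite lez_refl.
Qed.

Lemma rho_blue n h (c : {set 'I_n} * 'I_h -> bool) p q : c p -> lez q p -> q != p -> @rho n h c q < rho c p.
Proof.
move=> Hc Hqp Hne.
have : 0 < #|[pred S : {set {set 'I_n} * 'I_h} | [&& is_chain (@lez n h) S, [forall z in S, c z] &
       [forall z in S, lez z q]]]|.
  apply/card_gt0P; exists set0; rewrite inE; apply/and3P; split;
    apply/forall_inP => x; by rewrite inE.
case/(eq_bigmax_cond (fun S : {set _} => #|S|)) => S; rewrite inE => /and3P [H1 H2 H3] E.
rewrite /rho E.
have HpS : p \notin S.
  apply/negP => HpS; move/forall_inP: H3 => /(_ p HpS) Hpq.
  by rewrite (@lez_anti _ _ q p) ?Hqp ?Hpq ?eqxx in Hne.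
apply: leq_trans (@leq_bigmax_cond _ _ (fun S : {set _} => #|S|) (p |: S) _).
  by rewrite cardsU1 HpS.
have Hbelow : forall z, z \in S -> lez z p.
  by move=> z Hz; apply: lez_trans Hqp; move/forall_inP: H3; apply.
apply/and3P; split.
- apply/forall_inP => x /setU1P Hx; apply/forall_inP => y /setU1P Hy.
  case: Hx => [->|Hx]; case: Hy => [->|Hy].
  + by rewrite lez_refl.
  + by rewrite (Hbelow y Hy) orbT.
  + by rewrite (Hbelow x Hx).
  + by move/forall_inP: H1 => /(_ x Hx)/forall_inP/(_ y Hy).
- apply/forall_inP => x /setU1P [->|Hx] //; by move/forall_inP: H2; apply.
- apply/forall_inP => x /setU1P [->|Hx]; [exact: lez_refl | exact: Hbelow].
Qed.

Lemma chain_lemma n h' (c : {set 'I_n} * 'I_h'.+1 -> bool) :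
  (exists S, [/\ is_chain (@lez n h'.+1) S, h'.+1 <= #|S| & forall z, z \in S -> c z]) \/
  (exists J : {set 'I_n} -> 'I_h'.+1,
      (forall X Y : {set 'I_n}, X \subset Y -> J X <= J Y) /\ forall X, c (X, J X) = false).
Proof.
case: (classic (exists S, [/\ is_chain (@lez n h'.+1) S, h'.+1 <= #|S| & forall z, z \in S -> c z])) => [H|H]; [by left|right].
have HB : forall S, is_chain (@lez n h'.+1) S -> (forall z, z \in S -> c z) -> #|S| <= h'.
  move=> S H1 H2; rewrite leqNgt; apply/negP => H3; apply: H; by exists S.
have Hrb : forall p, rho c p <= h' by move=> p; exact: rho_bound.
pose J X := [arg min_(j < (@ord_max h') | rho c (X, j) <= j) j].
have HJ : forall X, rho c (X, J X) <= J X /\ forall j : 'I_h'.+1, rho c (X, j) <= j -> J X <= j.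
  move=> X; rewrite /J; case: arg_minnP => /=; first exact: Hrb.
  move=> i Hi Hmin; split => //.
exists J; split.
- move=> X Y HXY; apply: (proj2 (HJ X)).
  apply: leq_trans (proj1 (HJ Y)); apply: rho_mono; by rewrite /lez HXY leqnn.
- move=> X; apply/negP => Hc.
  have [H1 H2] := HJ X.
  move: H1 H2; case EJ: (J X) => [j Hj] /= H1 H2.
  case: j Hj EJ H1 H2 => [|j0] Hj EJ H1 H2.
    by have := rho_blue0 Hc; rewrite EJ; lia.
  have Hj0 : j0 < h'.+1 by lia.
  have Hlt := @rho_blue _ _ c (X, J X) (X, Ordinal Hj0) Hc.
  rewrite EJ in Hlt.
  have := Hlt _ _; rewrite /lez /= subxx /= => /(_ (ltnW (leqnn _))).
  move=> /(_ _) Hlt'.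
  have Hneq : (X, Ordinal Hj0) != (X, Ordinal Hj).
    apply/negP => /eqP [] E; lia.
  have := Hlt' Hneq => Hr.
  case Hq: (rho c (X, Ordinal Hj0) <= j0).
    have := H2 _ Hq; rewrite /=; lia.
  move/negbT: Hq; lia.
Qed.

Definition Eb n k h' (X : {set 'I_n}) (Y : {set 'I_k}) (j : nat) : {set 'I_(n + k + h')} :=
  [set u | match split u with
           | inl v => match split v with inl x => x \in X | inr y => y \in Y end
           | inr i => i < j end].

Lemma Eb_subP n k h' X Y j X' Y' j' : j <= h' ->
  (@Eb n k h' X Y j \subset Eb h' X' Y' j') = [&& X \subset X', Y \subset Y' & j <= j'].
Proof.
move=> Hj; apply/idP/idP.
- move/subsetP => H; apply/and3P; split.
  + apply/subsetP => x Hx.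
    have := H (unsplit (inl (unsplit (inl x)))); rewrite !inE !unsplitK; exact.
  + apply/subsetP => y Hy.
    have := H (unsplit (inl (unsplit (inr y)))); rewrite !inE !unsplitK; exact.
  + rewrite leqNgt; apply/negP => Hj'.
    have Hi : j' < h' by lia.
    have := H (unsplit (inr (Ordinal Hi))); rewrite !inE !unsplitK /= => /(_ Hj').
    by rewrite ltnn.
- case/and3P => /subsetP H1 /subsetP H2 H3; apply/subsetP => u; rewrite !inE.
  case: split => [v|i]; first case: split => [x|y].
  + exact: H1.
  + exact: H2.
  + move=> Hi; lia.
Qed.

Definition rk (T : finType) (le : rel T) (S : {set T}) (s : T) :=
  #|[set t in S | le t s && (t != s)]|.

Lemma rk_mono (T : finType) (le : rel T) (S : {set T}) s t : is_poset le ->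
  le s t -> rk le S s <= rk le S t.
Proof.
move=> [Hr [Ha Ht]] Hst; apply: subset_leq_card; apply/subsetP => u; rewrite !inE.
case/and3P => -> Hus Hne /=; rewrite (Ht _ _ _ Hus Hst) /=.
apply/negP => /eqP E; subst u; move/negP: Hne; apply; apply/eqP; apply: Ha; by rewrite Hus.
Qed.

Lemma rk_strict (T : finType) (le : rel T) (S : {set T}) s t : is_poset le ->
  s \in S -> le s t -> s != t -> rk le S s < rk le S t.
Proof.
move=> Hp Hs Hst Hne; have [Hr [Ha Ht]] := Hp.
apply: proper_card; rewrite properE; apply/andP; split.
  apply/subsetP => u; rewrite !inE.
  case/and3P => -> Hus Hnu /=; rewrite (Ht _ _ _ Hus Hst) /=.
  apply/negP => /eqP E; subst u; move/negP: Hne; apply; apply/eqP; apply: Ha; by rewrite Hus Hst.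
apply/subsetPn; exists s; first by rewrite !inE Hs Hst Hne.
by rewrite !inE eqxx !andbF.
Qed.

Lemma rk_le (T : finType) (le : rel T) (S : {set T}) s t : is_poset le -> is_chain le S ->
  s \in S -> t \in S -> rk le S s <= rk le S t -> le s t.
Proof.
move=> Hp /forall_inP HS Hs Ht H.
have /forall_inP/(_ t Ht) := HS s Hs; case/orP => // Hts.
have [Eq|Ne] := eqVneq t s; first by subst t; have [Hr _] := Hp; exact: Hr.
by have := rk_strict Hp Ht Hts Ne; lia.
Qed.

Lemma rk_lt (T : finType) (le : rel T) (S : {set T}) s : rk le S s <= #|S|.
Proof. by apply: subset_leq_card; apply/subsetP => u; rewrite inE => /andP []. Qed.

Lemma rk_surj (T : finType) (le : rel T) (S : {set T}) v : is_poset le -> is_chain le S ->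
  v < #|S| -> exists2 s, s \in S & rk le S s = v.
Proof.
move=> Hp HS Hv.
have Hinj : {in enum S &, injective (rk le S)}.
  move=> s t; rewrite !mem_enum => Hs Ht E.
  have [Hr [Ha Ht']] := Hp.
  apply: Ha; rewrite !(rk_le Hp HS) // E leqnn //.
have U : uniq [seq rk le S s | s <- enum S] by rewrite map_inj_in_uniq // enum_uniq.
have Hsub : {subset [seq rk le S s | s <- enum S] <= iota 0 #|S|}.
  move=> z /mapP [s Hs ->]; rewrite mem_iota /= add0n.
  rewrite mem_enum in Hs.
  apply: proper_card; rewrite properE; apply/andP; split.
    by apply/subsetP => u; rewrite inE => /andP [].
  apply/subsetPn; exists s => //; by rewrite !inE eqxx !andbF.
have [_ Heq] := uniq_min_size U Hsub ltac:(by rewrite size_map size_iota cardE).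
have : v \in iota 0 #|S| by rewrite mem_iota.
rewrite -Heq => /mapP [s Hs ->]; exists s => //; by rewrite -mem_enum.
Qed.

Lemma rep_spec (T : finType) (le : rel T) (A : {set T}) : is_poset le -> trivial_poset le ->
  is_antichain le A -> #|A| = width le -> forall x, exists2 a, a \in A & cmpb le x a.
Proof.
move=> Hp Ht HA HAw x; have [Hr _] := Hp.
case: (classic (exists2 a, a \in A & cmpb le x a)) => // Hn; exfalso.
have HxA : x \notin A by apply/negP => HxA; apply: Hn; exists x => //; rewrite /cmpb Hr.
have : is_antichain le (x |: A).
  apply/forall_inP => u /setU1P Hu; apply/forall_inP => v /setU1P Hv; apply/implyP => Huv.
  case: Hu => [Eu|Hu]; case: Hv => [Ev|Hv].
  - by subst u v; rewrite eqxx in Huv.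
  - subst u; case E: (cmpb le x v); first by exfalso; apply: Hn; exists v.
    by move/negbT: E; rewrite /cmpb negb_or.
  - subst v; case E: (cmpb le x u); first by exfalso; apply: Hn; exists u.
    by move/negbT: E; rewrite /cmpb negb_or andbC.
  - by move/forall_inP: HA => /(_ u Hu)/forall_inP/(_ v Hv)/implyP; apply.
move/width_ub; rewrite cardsU1 HxA HAw; lia.
Qed.

Lemma rep_uniq (T : finType) (le : rel T) (A : {set T}) : is_poset le -> trivial_poset le ->
  is_antichain le A -> forall x a b, a \in A -> b \in A -> cmpb le x a -> cmpb le x b -> a = b.
Proof.
move=> Hp Ht HA x a b Ha Hb Hxa Hxb.
have Hab : cmpb le a b by apply: cmpb_trans Hxb => //; rewrite cmpb_sym.
have [//|Ne] := eqVneq a b.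
move/forall_inP: HA => /(_ a Ha)/forall_inP/(_ b Hb)/implyP/(_ Ne).
by move: Hab; rewrite /cmpb => /orP [-> | ->] //=; rewrite andbF.
Qed.

Lemma rank_bound (T : finType) (le : rel T) x h' : is_poset le -> trivial_poset le ->
  height le = h'.+1 -> rk le [set: T] x < h'.+1.
Proof.
move=> Hp Ht Hh; have [Hr _] := Hp.
set D := [set t in [set: T] | le t x && (t != x)].
have HxD : x \notin D by rewrite !inE eqxx /= !andbF.
have : is_chain le (x |: D).
  have Hc : forall u, u \in x |: D -> cmpb le u x.
    move=> u /setU1P [->|]; first by rewrite /cmpb Hr.
    by rewrite inE /cmpb => /and3P [_ -> _].
  apply/forall_inP => u Hu; apply/forall_inP => v Hv.
  have := cmpb_trans Hp Ht (Hc u Hu) (y := x) (z := v); rewrite cmpb_sym (Hc v Hv).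
  by move/(_ isT).
move/height_ub; rewrite cardsU1 HxD Hh /rk -/D; lia.
Qed.

Lemma upper (T : finType) (le : rel T) n k h' : is_poset le -> trivial_poset le ->
  height le = h'.+1 -> width le <= 'C(k, k./2) -> ramsey_prop le (@Qle n) (n + k + h').
Proof.
move=> Hp Ht Hh Hw col.
have [Hr [Ha Htr]] := Hp.
pose cY (Y : {set 'I_k}) (p : {set 'I_n} * 'I_h'.+1) := col (Eb h' p.1 Y p.2).
case: (classic (exists Y (J : {set 'I_n} -> 'I_h'.+1),
      (forall X Y : {set 'I_n}, X \subset Y -> J X <= J Y) /\ forall X, cY Y (X, J X) = false)).
  move=> [Y [J [HJm HJr]]]; right.
  exists (fun X => Eb h' X Y (J X)); split; last exact: HJr.
  have HJh : forall X, J X <= h' by move=> X; have := ltn_ord (J X); lia.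
  have Hiff : forall X X', Qle X X' <-> Eb h' X Y (J X) \subset Eb h' X' Y (J X').
    move=> X X'; rewrite /Qle Eb_subP //; split.
      by move=> H; rewrite H subxx HJm.
    by case/and3P.
  split => //.
  move=> X X' E; apply/eqP; rewrite eqEsubset; apply/andP; split; apply/Hiff; by rewrite E.
move=> Hno.
have HBex : forall Y, exists S, [/\ is_chain (@lez n h'.+1) S, h'.+1 <= #|S| & forall z, z \in S -> cY Y z].
  move=> Y; case: (chain_lemma (cY Y)) => // Hr'; exfalso; apply: Hno; by exists Y.
pose BS Y := odflt set0 [pick S | [&& is_chain (@lez n h'.+1) S, h'.+1 <= #|S| & [forall z in S, cY Y z]]].
have HBS : forall Y, [/\ is_chain (@lez n h'.+1) (BS Y), h'.+1 <= #|BS Y| & forall z, z \in BS Y -> cY Y z].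
  move=> Y; rewrite /BS; case: pickP => [S /and3P [H1 H2 /forall_inP H3] | Hn] //=.
  exfalso; have [S [H1 H2 H3]] := HBex Y.
  have := Hn S; rewrite H1 H2 /=; move/negbT/negP; apply; by apply/forall_inP.
have Hpo : is_poset (@lez n h'.+1) by split; [exact: lez_refl | split; [exact: lez_anti | exact: lez_trans]].
have [A HA HAw] := width_wit le.
pose rep x := odflt x [pick a in A | cmpb le x a].
have Hrep : forall x, rep x \in A /\ cmpb le x (rep x).
  move=> x; rewrite /rep; case: pickP => [a /andP [H1 H2] | Hn] //=.
  exfalso; have [a Ha' Hxa] := rep_spec Hp Ht HA HAw x.
  by have := Hn a; rewrite Ha' Hxa.
have Hrepeq : forall x y, cmpb le x y -> rep x = rep y.
  move=> x y Hxy; have [Hx1 Hx2] := Hrep x; have [Hy1 Hy2] := Hrep y.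
  apply: (rep_uniq Hp Ht HA (x := x)) => //.
  by apply: cmpb_trans Hxy Hy2.
pose L := enum [set Y : {set 'I_k} | #|Y| == k./2].
have HL : size L = 'C(k, k./2) by rewrite -cardE card_draws card_ord.
pose g a := nth set0 L (index a (enum A)).
have Hg1 : forall a, a \in A -> #|g a| = k./2.
  move=> a Ha'; have : g a \in L.
    apply: mem_nth; rewrite HL; apply: leq_trans Hw; rewrite -HAw cardE index_mem mem_enum //.
  by rewrite mem_enum inE => /eqP.
have Hg2 : forall a b, a \in A -> b \in A -> g a = g b -> a = b.
  move=> a b Ha' Hb' E.
  have Hia : index a (enum A) < size L by rewrite HL; apply: leq_trans Hw; rewrite -HAw cardE index_mem mem_enum.
  have Hib : index b (enum A) < size L by rewrite HL; apply: leq_trans Hw; rewrite -HAw cardE index_mem mem_enum.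
  have : index a (enum A) = index b (enum A).
    by apply/eqP; rewrite -(nth_uniq set0 Hia Hib) ?enum_uniq //; apply/eqP.
  move/(congr1 (fun i => nth a (enum A) i)); rewrite !nth_index ?mem_enum //.
pose Yx x := g (rep x).
pose r x := rk le [set: T] x.
pose zx x := odflt (set0, ord0) [pick s in BS (Yx x) | rk (@lez n h'.+1) (BS (Yx x)) s == r x].
have Hz : forall x, zx x \in BS (Yx x) /\ rk (@lez n h'.+1) (BS (Yx x)) (zx x) = r x.
  move=> x; rewrite /zx; case: pickP => [s /andP [H1 /eqP H2] | Hn] //=.
  exfalso; have [H1 H2 H3] := HBS (Yx x).
  have Hrx : r x < #|BS (Yx x)| by apply: leq_trans H2; exact: rank_bound.
  have [s Hs Es] := rk_surj Hpo H1 Hrx.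
  by have := Hn s; rewrite Hs Es eqxx.
pose f x := Eb h' (zx x).1 (Yx x) (zx x).2.
have Hfz : forall x, (zx x).2 <= h' by move=> x; have := ltn_ord (zx x).2; lia.
have Hord : forall x y, le x y <-> f x \subset f y.
  move=> x y; split.
  - move=> Hxy.
    have Erep : rep x = rep y by apply: Hrepeq; rewrite /cmpb Hxy.
    have EY : Yx x = Yx y by rewrite /Yx Erep.
    have [Hzx1 Hzx2] := Hz x; have [Hzy1 Hzy2] := Hz y.
    rewrite EY in Hzx1 Hzx2.
    have Hl : lez (zx x) (zx y).
      have [HB1 _ _] := HBS (Yx y).
      apply: (rk_le Hpo HB1) => //.
      by rewrite Hzx2 Hzy2; apply: rk_mono.
    rewrite /f Eb_subP // EY subxx /=.
    by move: Hl; rewrite /lez => /andP [-> ->].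
  - rewrite /f Eb_subP // => /and3P [H1 H2 H3].
    have EY : Yx x = Yx y.
      apply/eqP; rewrite eqEcard H2 /Yx !Hg1 //=. all: try by case: (Hrep x). all: try by case: (Hrep y).
    have Erep : rep x = rep y by apply: Hg2 => //; [exact: (proj1 (Hrep x)) | exact: (proj1 (Hrep y))].
    have Hcxy : cmpb le x y.
      apply: (cmpb_trans Hp Ht (proj2 (Hrep x))); rewrite Erep cmpb_sym; exact: (proj2 (Hrep y)).
    case/orP: Hcxy => // Hyx.
    have [->|Ne] := eqVneq y x; first exact: Hr.
    exfalso.
    have Hlt : r y < r x by apply: rk_strict => //; rewrite inE.
    have [Hzx1 Hzx2] := Hz x; have [Hzy1 Hzy2] := Hz y.
    rewrite EY in Hzx1 Hzx2.
    have Hl : lez (zx x) (zx y) by rewrite /lez H1 H3.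
    have := rk_mono (BS (Yx y)) Hpo Hl; rewrite Hzx2 Hzy2; lia.
left; exists f; split.
  split => // x y E; apply: Ha; apply/andP; split; apply/Hord; by rewrite E.
move=> x; have [Hzx1 _] := Hz x; have [_ _ HB3] := HBS (Yx x); exact: (HB3 _ Hzx1).
Qed.

Lemma binF1 i : i.+1 * 'C(i.*2.+1, i) = i.*2.+1 * 'C(i.*2, i).
Proof.
have := mul_bin_down i.*2.+1 i; rewrite /= => ->.
by congr (_ * _); lia.
Qed.

Lemma binF2 i : 'C(i.+1.*2, i.+1) = 2 * 'C(i.*2.+1, i).
Proof.
have := mul_bin_diag i.+1.*2 i.
rewrite doubleS /= => H.
have : i.+1 * 'C(i.*2.+2, i.+1) = i.+1 * (2 * 'C(i.*2.+1, i)) by rewrite -H; lia.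
by move/eqP; rewrite eqn_pmul2l // => /eqP.
Qed.

Lemma bin_b i : 16 ^ i <= 'C(i.*2.+1, i) ^ 2 * i.+1.
Proof.
elim: i => [|i IH]; first by [].
set a := 'C(i.+1.*2, i.+1).
set b := 'C(i.+1.*2.+1, i.+1).
have Ha : a = 2 * 'C(i.*2.+1, i) by rewrite /a binF2.
have F := binF1 i.+1; rewrite -/a -/b in F.
have HA : 16 ^ i.+1 <= a ^ 2 * (4 * i.+1).
  rewrite Ha expnS; move: IH; set c := 'C(_, _); move=> IH.
  have -> : (2 * c) ^ 2 * (4 * i.+1) = 16 * (c ^ 2 * i.+1) by rewrite expnMn; lia.
  by rewrite leq_mul2l.
have E2 : i.+2 ^ 2 * b ^ 2 = (i.+1.*2.+1) ^ 2 * a ^ 2 by rewrite -!expnMn F.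
have : (4 * i.+1 * i.+2) * 16 ^ i.+1 <= (4 * i.+1 * i.+2) * (b ^ 2 * i.+2).
  apply: (@leq_trans ((i.+1.*2.+1) ^ 2 * 16 ^ i.+1)).
    rewrite leq_mul2r; apply/orP; right; rewrite -mul2n; nia.
  apply: (@leq_trans ((i.+1.*2.+1) ^ 2 * (a ^ 2 * (4 * i.+1)))).
    by rewrite leq_mul2l HA orbT.
  have -> : (4 * i.+1 * i.+2) * (b ^ 2 * i.+2) = (i.+2 ^ 2 * b ^ 2) * (4 * i.+1) by rewrite !expnS !expn0; lia.
  rewrite E2; rewrite mulnA; lia.
by rewrite leq_pmul2l.
Qed.

Lemma cbound m : 4 ^ m <= 'C(m, m./2) ^ 2 * (2 * m.+1).
Proof.
have Hm := odd_double_half m.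
have E16 : forall j, 4 ^ j.*2 = 16 ^ j by move=> j; rewrite -mul2n expnM.
move: (m./2) Hm => i Hm.
case: (odd m) Hm => /= Hm.
- have -> : m = i.*2.+1 by lia.
  have := bin_b i.
  have -> : 4 ^ i.*2.+1 = 4 * 16 ^ i by rewrite expnS E16.
  move=> H; have -> : 'C(i.*2.+1, i) ^ 2 * (2 * (i.*2.+1).+1) = 4 * ('C(i.*2.+1, i) ^ 2 * i.+1) by lia.
  by rewrite leq_mul2l H orbT.
- have -> : m = i.*2 by lia.
  rewrite E16; case: i {Hm} => [|j]; first by [].
  rewrite binF2 expnS.
  have := bin_b j; set b := 'C(_, _) => H.
  have -> : (2 * b) ^ 2 * (2 * (j.+1.*2).+1) = 16 * (b ^ 2 * j.+1) + 8 * b ^ 2.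
    rewrite expnMn (_ : 2 ^ 2 = 4) //; set bb := b ^ 2; nia.
  apply: leq_trans (leq_addr _ _); by rewrite leq_mul2l H orbT.
Qed.

Lemma bin_half_ge w : w < 'C(w.*2, w).
Proof.
elim: w => [|w IH]; first by [].
rewrite binF2.
have F := binF1 w.
have : 'C(w.*2, w) <= 'C(w.*2.+1, w).
  have : w.+1 * 'C(w.*2, w) <= w.+1 * 'C(w.*2.+1, w) by rewrite F leq_mul2r; apply/orP; right; lia.
  by rewrite leq_mul2l.
lia.
Qed.

Lemma w2_bound (w m : nat) : 2 <= w -> 'C(m, m./2) < w -> 2 ^ m.+1 <= w ^ 2.
Proof.
move=> Hw Hc.
have Hcb := cbound m.
case: (leqP m 4) => Hm.
- have Hw2 : forall c, c < w -> c.+1 ^ 2 <= w ^ 2 by move=> c Hcw; rewrite leq_exp2r.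
  move: Hc Hw2; case: m Hm {Hcb} => [|[|[|[|[|m]]]]] // _ Hc Hw2;
    apply: leq_trans (Hw2 _ Hc); by [].
- have Hp : 4 * m.+1 <= 2 ^ m.
    elim: m Hm {Hc Hcb} => [|m IH] //; rewrite ltnS leq_eqVlt => /orP [/eqP <-|Hm] //.
    rewrite expnS; have := IH Hm; lia.
  have H4 : 4 ^ m = 2 ^ m * 2 ^ m by rewrite -expnMn.
  have : 'C(m, m./2) ^ 2 < w ^ 2 by rewrite ltn_exp2r.
  move=> Hc2.
  have : 2 ^ m.+1 * (2 * m.+1) <= 4 ^ m by rewrite H4 expnS; nia.
  move=> H1.
  have : 2 ^ m.+1 * (2 * m.+1) < w ^ 2 * (2 * m.+1).
    apply: leq_ltn_trans H1 _; apply: leq_ltn_trans Hcb _; rewrite ltn_mul2r; lia.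
  rewrite ltn_mul2r => /andP [_ H]; exact: ltnW.
Qed.

Lemma w2_bound2 (w m : nat) : 'C(m, m./2) < w -> 4 ^ m < w ^ 2 * (2 * m.+1).
Proof.
move=> Hc; apply: leq_ltn_trans (cbound m) _; rewrite ltn_mul2r; apply/andP; split => //.
by rewrite ltn_exp2r.
Qed.

Open Scope R_scope.

Lemma INR_expn a b : INR (a ^ b)%N = INR a ^ b.
Proof. elim: b => [|b IH] /=; first by []. by rewrite expnS -multE mult_INR IH. Qed.

Lemma INR_muln a b : INR (a * b)%N = INR a * INR b.
Proof. by rewrite -multE mult_INR. Qed.

Lemma ln_le' x y : (0 < x) -> (x <= y) -> (ln x <= ln y).
Proof.
move=> Hx Hxy; case: (Rle_lt_or_eq_dec _ _ Hxy) => H.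
  by apply: Rlt_le; apply: ln_increasing.
by rewrite H; apply: Rle_refl.
Qed.

Lemma ln2_pos : (0 < ln 2).
Proof. rewrite -ln_1; apply: ln_increasing; lra. Qed.

Lemma real_core (l lw X m : R) : (0 < l) -> (0 <= m) ->
  ((m + 1) * l <= 2 * lw) -> (2 * m * l < 2 * lw + l + X) ->
  (ln (lw / l) >= X - l) ->
  (m - 1 < lw / l + / 2 * (ln (lw / l) / l)).
Proof.
move=> Hl Hm H1 H2 H3.
have -> : (lw / l + / 2 * (ln (lw / l) / l) = (2 * lw + ln (lw / l)) / (2 * l)).
  by field; lra.
apply: (Rmult_lt_reg_r (2 * l)); first lra.
have -> : ((2 * lw + ln (lw / l)) / (2 * l) * (2 * l) = 2 * lw + ln (lw / l)) by field; lra.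
nra.
Qed.

Lemma real_part (w m : nat) : (2 <= w)%N -> (2 ^ m.+1 <= w ^ 2)%N -> (4 ^ m < w ^ 2 * (2 * m.+1))%N ->
  (INR m - 1 < log2 (INR w) + / 2 * log2 (log2 (INR w))).
Proof.
move=> Hw H1 H2.
have Hl := ln2_pos.
have Hw0 : (0 < INR w) by apply: lt_0_INR; apply/ltP; lia.
have Hm0 : (0 <= INR m) by apply: pos_INR.
have E2 : INR 2 = 2%R by rewrite /=; lra.
have Elnw2 : ln (INR (w ^ 2)%N) = (2 * ln (INR w)) by rewrite INR_expn ln_pow // E2.
have R1 : ((INR m + 1) * ln 2 <= 2 * ln (INR w)).
  rewrite -Elnw2 -S_INR -E2 -ln_pow ?E2; last lra.
  rewrite -E2 -INR_expn; apply: ln_le'.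
    by rewrite INR_expn E2; apply: pow_lt; lra.
  by apply: le_INR; apply/leP.
have R2 : (2 * INR m * ln 2 < 2 * ln (INR w) + ln 2 + ln (INR m + 1)).
  have := lt_INR _ _ (ltP H2).
  have E4 : INR 4 = 4 by rewrite /=; lra.
  rewrite INR_muln INR_muln INR_expn INR_expn E4 E2 (S_INR m) => H.
  have Hp : (0 < (4 ^ m)) by apply: pow_lt; rewrite /=; lra.
  have := ln_increasing _ _ Hp H.
  rewrite ln_pow; last lra.
  rewrite ln_mult; last (by apply: Rmult_lt_0_compat; lra); last by apply: pow_lt.
  rewrite ln_mult; [|lra|lra].
  rewrite ln_pow //.
  rewrite (_ : 4%R = 2 * 2); last lra.
  rewrite ln_mult; [|lra|lra].
  rewrite E2 => H'; lra.
rewrite /log2.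
apply: (real_core Hl Hm0 R1 R2).
have Hpos : (0 < (INR m + 1) / 2) by apply: Rdiv_lt_0_compat; lra.
have : (ln ((INR m + 1) / 2) <= ln (ln (INR w) / ln 2)).
  apply: ln_le' => //.
  apply: (Rmult_le_reg_r (2 * ln 2)); first lra.
  have -> : ((INR m + 1) / 2 * (2 * ln 2) = (INR m + 1) * ln 2) by field.
  have -> : (ln (INR w) / ln 2 * (2 * ln 2) = 2 * ln (INR w)) by field; lra.
  exact: R1.
rewrite /Rdiv ln_mult; [|lra|lra].
rewrite ln_Rinv; last lra.
lra.
Qed.

Close Scope R_scope.

Lemma min_exists (P : nat -> Prop) N0 : P N0 -> exists N, P N /\ forall M, M < N -> ~ P M.
Proof.
move: N0; elim/ltn_ind => N0 IH HP.
case: (classic (exists M, M < N0 /\ P M)) => [[M [HM HPM]]|Hn].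
  exact: (IH M HM HPM).
exists N0; split => // M HM HPM; apply: Hn; by exists M.
Qed.

Lemma height_pos (T : finType) (le : rel T) : is_poset le -> 0 < width le -> 0 < height le.
Proof.
move=> [Hr _] Hw.
have [A HA HAw] := width_wit le.
have : 0 < #|A| by rewrite HAw.
case/card_gt0P => a Ha.
apply: leq_trans (height_ub (S := [set a]) _); first by rewrite cards1.
apply/forall_inP => x /set1P ->; apply/forall_inP => y /set1P ->; by rewrite Hr.
Qed.

From Stdlib Require Import Reals.

Theorem corollary7 (T : finType) (le : rel T) :
  is_poset le -> trivial_poset le ->
  (width le = 1 ->
     forall n : nat, 0 < n ->
       is_ramsey_number le (@Qle n) (n + height le - 1)) /\
  (2 <= width le ->
     forall n : nat, 0 < n ->
       exists N : nat, is_ramsey_number le (@Qle n) N /\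
         n + height le + 1 <= N /\
         (INR N < INR n + INR (height le) + log2 (INR (width le))
                  + / 2 * log2 (log2 (INR (width le))) + 1)%R).
Proof.
move=> Hp Ht.
have Hh0 : 0 < width le -> exists h', height le = h'.+1.
  move=> Hw; have := height_pos Hp Hw; case: (height le) => [|h'] // _; by exists h'.
split.
- move=> Hw n Hn.
  have [h' Hh] : exists h', height le = h'.+1 by apply: Hh0; rewrite Hw.
  split.
    have := upper (n := n) (k := 0) Hp Ht Hh; rewrite Hw addn0 Hh => H.
    have -> : n + h'.+1 - 1 = n + h' by lia.
    exact: H.
  move=> M HM; apply: lower_w1 => //; by rewrite Hh.
- move=> Hw n Hn.
  have [h' Hh] : exists h', height le = h'.+1 by apply: Hh0; lia.
  set w := width le in Hw *.
  have Hex : exists k, w <= 'C(k, k./2).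
    exists w.*2; rewrite doubleK; exact: ltnW (bin_half_ge w).
  case: (ex_minnP Hex) => k Hk Hkmin.
  have Hk0 : 0 < k by case: k Hk {Hkmin} => [|k] //=; rewrite bin0; lia.
  set m := k.-1.
  have Hcm : 'C(m, m./2) < w.
    rewrite ltnNge; apply/negP => H; have := Hkmin m H; rewrite /m; lia.
  have Hram := upper (n := n) Hp Ht Hh Hk.
  have [N [HN HNmin]] := min_exists Hram.
  exists N; split; first by split.
  have HNle : N <= n + k + h'.
    rewrite leqNgt; apply/negP => H; exact: (HNmin _ H Hram).
  split.
    rewrite leqNgt; apply/negP => H.
    apply: (lower_w2 (n := n) (M := N) Hp Ht) => //; [by rewrite Hh | lia].
  have Hreal := real_part Hw (w2_bound Hw Hcm) (w2_bound2 Hcm).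
  have : (INR N <= INR (n + m + h'.+1))%R by apply: le_INR; apply/leP; rewrite /m; lia.
  rewrite Hh !plus_INR !S_INR -/w; move: Hreal; rewrite /log2; lra.
Qed.
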